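(* The algorithm \textsc{Arrows} described in the context can be implemented so that its total running time over the horizon $t=1,\dots,n$ is $O(n\log n)$.
   Context: Haar transform: for $k$ a power of $2$, $H\in\mathbb{R}^{k\times k}$ is the orthonormal discrete Haar wavelet transform: $(Hv)_1=k^{-1/2}\sum_i v_i$, and for each level $l=0,\dots,\log_2k-1$ and $j=1,\dots,2^l$, splitting the block $\{(j-1)k/2^l+1,\dots,jk/2^l\}$ into first half $I^-$ and second half $I^+$, there is a coefficient $(\sum_{I^+}v_i-\sum_{I^-}v_i)/\sqrt{k/2^l}$; the level-$l$ coefficients form the block $\alpha[l]\in\mathbb{R}^{2^l}$. $pad_0(y_a,\dots,y_b)$ is $(y_a-\bar y_{a:b},\dots,y_b-\bar y_{a:b})$ ($\bar y_{a:b}$ the average) followed by zeros up to length $k$, the smallest power of $2$ $\ge b-a+1$. $T$ is coordinatewise soft thresholding at level $\sigma\sqrt{\beta\log n}$. Algorithm \textsc{Arrows} (inputs: horizon $n$, $\sigma>0$, $\delta\in(0,1]$, $\beta>24$; observations $y_1,\dots,y_n$ arrive online): set $t_h=1$, $newBin=1$, $y_0=0$. For $t=1,\dots,n$: if $newBin=1$ predict $x_t=y_{t-1}$, else $x_t=\bar y_{t_h:t-1}$; set $newBin=0$, observe $y_t$; let $\tilde y=pad_0(y_{t_h},\dots,y_t)$ with length $k$ and $\hat\alpha=T(H\tilde y)$; if $\frac{1}{\sqrt k}\sum_{l=0}^{\log_2k-1}2^{l/2}\|\hat\alpha[l]\|_1>\frac{\sigma}{\sqrt k}$ then set $newBin=1$,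 $t_h=t+1$. *)

(* Defs.v *)
From Stdlib Require Import Reals List Lia.
Import ListNotations.
Open Scope R_scope.

(*  Specification of ARROWS (indices of observations are 1-based,   *)
(*  y_0 := 0; padded vectors are indexed 0..k-1).                   *)

Definition sumR (f : nat -> R) (a len : nat) : R :=
  fold_right (fun i acc => f i + acc) 0 (seq a len).

Definition y0 (y : nat -> R) (i : nat) : R := if Nat.eqb i 0 then 0 else y i.

Definition meanR (y : nat -> R) (a b : nat) : R :=
  sumR (y0 y) a (b - a + 1) / INR (b - a + 1).

Definition pad_exp (a b : nat) : nat := Nat.log2_up (b - a + 1).

Definition pad0 (y : nat -> R) (a b : nat) (i : nat) : R :=
  if Nat.ltb i (b - a + 1) then y0 y (a + i) - meanR y a b else 0.

(* Haar detail coefficient of a vector v of length k = 2^m, at level l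
   (0 <= l < m) and block j (0-based, 0 <= j < 2^l): the block has size
   s = k/2^l = 2^(m-l); coefficient = (sum_{I+} v - sum_{I-} v)/sqrt s. *)
Definition haar_detail (m : nat) (v : nat -> R) (l j : nat) : R :=
  let s := (2 ^ (m - l))%nat in
  let st := (j * s)%nat in
  (sumR v (st + Nat.div s 2) (Nat.div s 2) - sumR v st (Nat.div s 2)) / sqrt (INR s).

Definition soft (lam x : R) : R :=
  if Rlt_dec lam x then x - lam else if Rlt_dec x (- lam) then x + lam else 0.

Definition arrows_test (sigma beta : R) (n : nat) (y : nat -> R) (a b : nat) : bool :=
  let m := pad_exp a b in
  let k := (2 ^ m)%nat in
  let v := pad0 y a b in
  let lam := sigma * sqrt (beta * ln (INR n)) in
  let lhs := (1 / sqrt (INR k)) *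
             sumR (fun l => sqrt (2 ^ l) *
                     sumR (fun j => Rabs (soft lam (haar_detail m v l j))) 0 (2 ^ l))
                  0 m in
  if Rlt_dec (sigma / sqrt (INR k)) lhs then true else false.

(* state (t_h, newBin) after processing steps 1..t *)
Fixpoint arrows_state (sigma beta : R) (n : nat) (y : nat -> R) (t : nat) : nat * bool :=
  match t with
  | O => (1%nat, true)
  | S t' =>
      let (th, nb) := arrows_state sigma beta n y t' in
      if arrows_test sigma beta n y th t then (S t, true) else (th, false)
  end.

Definition arrows_pred (sigma beta : R) (n : nat) (y : nat -> R) (t : nat) : R :=
  let (th, nb) := arrows_state sigma beta n y (t - 1) in
  if nb then y0 y (t - 1) else meanR y th (t - 1).

Definition arrows_predictions (sigma beta : R) (n : nat) (y : nat -> R) : list R :=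
  map (arrows_pred sigma beta n y) (seq 1 n).

(*  Cost model: a real-RAM with unit-cost instructions.             *)

Inductive instr : Type :=
| NConst (d k : nat)
| NAdd (d a b : nat)
| NSub (d a b : nat)          (* N[d] := N[a] - N[b] (truncated) *)
| NLoad (d p : nat)
| NStore (p s : nat)
| RofN (d a : nat)
| RAdd (d a b : nat)
| RSub (d a b : nat)
| RMul (d a b : nat)
| RDiv (d a b : nat)
| RSqrt (d a : nat)
| RLn (d a : nat)
| RLoad (d p : nat)
| RStore (p s : nat)
| JmpNLt (a b tgt : nat)
| JmpNEq (a b tgt : nat)
| JmpRLt (a b tgt : nat)
| Jmp (tgt : nat)
| Read (d : nat)
| Write (a : nat)
| Halt.

Record config : Type := mkConfig {
  pc : nat;
  nreg : nat -> nat;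
  rreg : nat -> R;
  nread : nat;
  outs : list (nat * R)        (* outputs, each tagged with nread at emission *)
}.

Definition upd {A : Type} (f : nat -> A) (i : nat) (v : A) : nat -> A :=
  fun j => if Nat.eqb j i then v else f j.

Definition exec (y : nat -> R) (i : instr) (c : config) : config :=
  let '(mkConfig p N Rr r o) := c in
  let nx := S p in
  match i with
  | NConst d k => mkConfig nx (upd N d k) Rr r o
  | NAdd d a b => mkConfig nx (upd N d (N a + N b)%nat) Rr r o
  | NSub d a b => mkConfig nx (upd N d (N a - N b)%nat) Rr r o
  | NLoad d q => mkConfig nx (upd N d (N (N q))) Rr r o
  | NStore q s => mkConfig nx (upd N (N q) (N s)) Rr r o
  | RofN d a => mkConfig nx N (upd Rr d (INR (N a))) r o
  | RAdd d a b => mkConfig nx N (upd Rr d (Rr a + Rr b)) r o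
  | RSub d a b => mkConfig nx N (upd Rr d (Rr a - Rr b)) r o
  | RMul d a b => mkConfig nx N (upd Rr d (Rr a * Rr b)) r o
  | RDiv d a b => mkConfig nx N (upd Rr d (Rr a / Rr b)) r o
  | RSqrt d a => mkConfig nx N (upd Rr d (sqrt (Rr a))) r o
  | RLn d a => mkConfig nx N (upd Rr d (ln (Rr a))) r o
  | RLoad d q => mkConfig nx N (upd Rr d (Rr (N q))) r o
  | RStore q s => mkConfig nx N (upd Rr (N q) (Rr s)) r o
  | JmpNLt a b t => mkConfig (if Nat.ltb (N a) (N b) then t else nx) N Rr r o
  | JmpNEq a b t => mkConfig (if Nat.eqb (N a) (N b) then t else nx) N Rr r o
  | JmpRLt a b t => mkConfig (if Rlt_dec (Rr a) (Rr b) then t else nx) N Rr r o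
  | Jmp t => mkConfig t N Rr r o
  | Read d => mkConfig nx N (upd Rr d (y (S r))) (S r) o
  | Write a => mkConfig nx N Rr r (o ++ [(r, Rr a)])
  | Halt => c
  end.

Definition step (P : list instr) (y : nat -> R) (c : config) : option config :=
  match nth_error P (pc c) with
  | None => None
  | Some Halt => None
  | Some i => Some (exec y i c)
  end.

(* run P y (S T) c = Some c' iff the machine halts after at most T steps
   (T unit-cost instructions), in final configuration c' *)
Fixpoint run (P : list instr) (y : nat -> R) (fuel : nat) (c : config) : option config :=
  match fuel with
  | O => None
  | S f => match step P y c with
           | None => Some c
           | Some c' => run P y f c'
           end
  end.

Definition init_config (n : nat) (sigma delta beta : R) : config :=
  mkConfig 0 (upd (fun _ => 0%nat) 0 n)
    (upd (upd (upd (upd (fun _ => 0) 0 (INR n)) 1 sigma) 2 delta) 3 beta)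
    0 [].

(* Main.v *)
Require Import Defs.
From Stdlib Require Import Reals List Lia Lra Arith.
Import ListNotations.
Open Scope R_scope.

Lemma sumR_0 f a : sumR f a 0 = 0.
Proof. reflexivity. Qed.

Lemma sumR_S f a len : sumR f a (S len) = f a + sumR f (S a) len.
Proof. reflexivity. Qed.

Lemma sumR_add f a x z : sumR f a (x + z) = sumR f a x + sumR f (a + x) z.
Proof.
  revert a. induction x as [|x IH]; intro a.
  - rewrite Nat.add_0_r, Nat.add_0_l, sumR_0. ring.
  - rewrite Nat.add_succ_l, !sumR_S, IH. replace (S a + x)%nat with (a + S x)%nat by lia. ring.
Qed.

Lemma sumR_snoc f a len : sumR f a (S len) = sumR f a len + f (a + len)%nat.
Proof.
  replace (S len) with (len + 1)%nat by lia. rewrite sumR_add. rewrite sumR_S, sumR_0. ring.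
Qed.

Lemma sumR_ext f g a len : (forall i, (a <= i < a + len)%nat -> f i = g i) ->
  sumR f a len = sumR g a len.
Proof.
  revert a. induction len as [|len IH]; intros a H.
  - reflexivity.
  - rewrite !sumR_S. rewrite H by lia. rewrite IH; [reflexivity|]. intros; apply H; lia.
Qed.

Lemma sumR_zero f a len : (forall i, (a <= i < a + len)%nat -> f i = 0) -> sumR f a len = 0.
Proof.
  intro H. transitivity (sumR (fun _ => 0) a len).
  - apply sumR_ext; auto.
  - clear. revert a; induction len; intros; [reflexivity|]. rewrite sumR_S, IHlen; ring.
Qed.

Lemma sumR_scal c f a len : c * sumR f a len = sumR (fun i => c * f i) a len.
Proof.
  revert a; induction len; intros; [rewrite !sumR_0; ring|]. rewrite !sumR_S, <- IHlen; ring.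
Qed.

Lemma sumR_div c f a len : sumR f a len / c = sumR (fun i => f i / c) a len.
Proof. unfold Rdiv. rewrite Rmult_comm, sumR_scal. apply sumR_ext; intros; ring. Qed.

Lemma sumR_plus f g a len : sumR (fun i => f i + g i) a len = sumR f a len + sumR g a len.
Proof.
  revert a; induction len; intros; [rewrite !sumR_0; ring|]. rewrite !sumR_S, IHlen; ring.
Qed.

Lemma sumR_shift f a len : sumR f (S a) len = sumR (fun i => f (S i)) a len.
Proof.
  revert a; induction len; intros; [reflexivity|]. rewrite !sumR_S, IHlen; reflexivity.
Qed.

Lemma sumR_rev g m : sumR (fun l => g (m - l)%nat) 0 m = sumR g 1 m.
Proof.
  induction m as [|m IH].
  - reflexivity.
  - rewrite sumR_S, sumR_snoc, sumR_shift. replace (S m - 0)%nat with (S m) by lia.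
    replace (1 + m)%nat with (S m) by lia.
    rewrite <- IH. simpl (S m - S _)%nat. ring.
Qed.

Lemma sumR_point f X e a len : (a <= e < a + len)%nat ->
  sumR (fun i => if Nat.eqb i e then X else f i) a len = sumR f a len + (X - f e).
Proof.
  revert a; induction len as [|len IH]; intros a H; [lia|].
  rewrite !sumR_S. destruct (Nat.eq_dec a e) as [->|ne].
  - rewrite Nat.eqb_refl. rewrite (sumR_ext _ f). ring.
    intros i Hi. destruct (Nat.eqb_spec i e); [lia|reflexivity].
  - rewrite (proj2 (Nat.eqb_neq a e) ne). rewrite IH by lia. ring.
Qed.

Definition Pf (y : nat -> R) (i : nat) : R := sumR y 1 i.
Definition Gm (y : nat -> R) (a : nat) (mean : R) (x : nat) : R :=
  Pf y x - Pf y (a - 1) - INR (x - (a - 1)) * mean.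
Definition HA (y : nat -> R) (a b : nat) (mean : R) (e x0 : nat) : R :=
  ((Gm y a mean (Nat.min (x0 + 2 ^ e) b) - Gm y a mean (Nat.min (x0 + 2 ^ (e - 1)) b))
   - (Gm y a mean (Nat.min (x0 + 2 ^ (e - 1)) b) - Gm y a mean x0)) / sqrt (INR (2 ^ e)).
Definition HP (y : nat -> R) (e x0 : nat) : R :=
  ((Pf y (x0 + 2 ^ e) - Pf y (x0 + 2 ^ (e - 1)))
   - (Pf y (x0 + 2 ^ (e - 1)) - Pf y x0)) / sqrt (INR (2 ^ e)).
Definition absoft (lam x : R) : R := Rabs (soft lam x).
Definition Wc (y : nat -> R) (lam : R) (a e L : nat) : R :=
  sumR (fun j => absoft lam (HP y e (a - 1 + j * 2 ^ e)) / sqrt (INR (2 ^ e))) 0 (L / 2 ^ e).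
Definition Str (y : nat -> R) (lam : R) (a b e : nat) : R :=
  if Nat.eqb ((b - a + 1) mod 2 ^ e) 0 then 0
  else absoft lam (HA y a b (meanR y a b) e (b - (b - a + 1) mod 2 ^ e)) / sqrt (INR (2 ^ e)).

Lemma Pf_S y i : Pf y (S i) = Pf y i + y (S i).
Proof. unfold Pf. rewrite sumR_snoc. f_equal. Qed.

Lemma sum_pad y a b x len : (1 <= a <= b)%nat ->
  sumR (pad0 y a b) x len =
  Gm y a (meanR y a b) (a - 1 + Nat.min (x + len) (b - a + 1))
  - Gm y a (meanR y a b) (a - 1 + Nat.min x (b - a + 1)).
Proof.
  intro Hab. induction len as [|len IH].
  - rewrite sumR_0, Nat.add_0_r. ring.
  - rewrite sumR_snoc, IH. unfold pad0.
    destruct (Nat.ltb_spec (x + len) (b - a + 1)) as [Hl|Hl].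
    + replace (Nat.min (x + S len) (b - a + 1)) with (S (x + len)) by lia.
      replace (Nat.min (x + len) (b - a + 1)) with (x + len)%nat by lia.
      unfold Gm. replace (a - 1 + S (x + len))%nat with (S (a - 1 + (x + len))) by lia.
      rewrite Pf_S.
      replace (S (a - 1 + (x + len)) - (a - 1))%nat with (S (x + len)) by lia.
      replace (a - 1 + (x + len) - (a - 1))%nat with (x + len)%nat by lia.
      rewrite S_INR. unfold y0.
      replace (Nat.eqb (a + (x + len)) 0) with false by (symmetry; apply Nat.eqb_neq; lia).
      replace (S (a - 1 + (x + len))) with (a + (x + len))%nat by lia. ring.
    + replace (Nat.min (x + S len) (b - a + 1)) with (b - a + 1)%nat by lia.
      replace (Nat.min (x + len) (b - a + 1)) with (b - a + 1)%nat by lia. ring.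
Qed.

Lemma pow2_S e : (2 ^ S e = 2 ^ e + 2 ^ e)%nat.
Proof. simpl. lia. Qed.

Lemma div2_pow e : (1 <= e)%nat -> Nat.div (2 ^ e) 2 = (2 ^ (e - 1))%nat.
Proof.
  intro H. destruct e as [|e]; [lia|]. replace (S e - 1)%nat with e by lia.
  rewrite Nat.pow_succ_r'. rewrite Nat.mul_comm. apply Nat.div_mul. lia.
Qed.

Lemma pow2_pred e : (1 <= e)%nat -> (2 ^ e = 2 ^ (e - 1) + 2 ^ (e - 1))%nat.
Proof. intro H. destruct e as [|e]; [lia|]. replace (S e - 1)%nat with e by lia. apply pow2_S. Qed.

Lemma hd_HA y a b m l j : (1 <= a <= b)%nat -> (l < m)%nat ->
  (j * 2 ^ (m - l) <= b - a + 1)%nat ->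
  haar_detail m (pad0 y a b) l j = HA y a b (meanR y a b) (m - l) (a - 1 + j * 2 ^ (m - l)).
Proof.
  intros Hab Hl Hj. unfold haar_detail, HA. cbv zeta.
  rewrite div2_pow by lia. rewrite !sum_pad by lia.
  set (e := (m - l)%nat) in *. set (h := (2 ^ (e - 1))%nat).
  assert (He : (2 ^ e = h + h)%nat) by (apply pow2_pred; lia).
  rewrite He in *.
  replace (a - 1 + Nat.min (j * (h + h) + h + h) (b - a + 1))%nat
    with (Nat.min (a - 1 + j * (h + h) + (h + h)) b) by lia.
  replace (a - 1 + Nat.min (j * (h + h) + h) (b - a + 1))%nat
    with (Nat.min (a - 1 + j * (h + h) + h) b) by lia.
  replace (a - 1 + Nat.min (j * (h + h)) (b - a + 1))%nat
    with (a - 1 + j * (h + h))%nat by lia.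
  reflexivity.
Qed.

Lemma hd_zero y a b m l j : (1 <= a <= b)%nat -> (l < m)%nat ->
  (b - a + 1 <= j * 2 ^ (m - l))%nat ->
  haar_detail m (pad0 y a b) l j = 0.
Proof.
  intros Hab Hl Hj. unfold haar_detail. cbv zeta.
  rewrite !sum_pad by lia.
  rewrite !(Nat.min_r _ (b - a + 1)) by lia. unfold Rdiv. ring.
Qed.

Lemma HA_HP y a b mean e x0 : (1 <= a)%nat -> (1 <= e)%nat -> (a - 1 <= x0)%nat ->
  (x0 + 2 ^ e <= b)%nat -> HA y a b mean e x0 = HP y e x0.
Proof.
  intros Ha He Hx Hb. unfold HA, HP, Gm.
  set (h := (2 ^ (e - 1))%nat).
  assert (E : (2 ^ e = h + h)%nat) by (apply pow2_pred; lia).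
  rewrite E in *.
  rewrite !Nat.min_l by lia.
  replace (x0 + (h + h) - (a - 1))%nat with (x0 - (a - 1) + h + h)%nat by lia.
  replace (x0 + h - (a - 1))%nat with (x0 - (a - 1) + h)%nat by lia.
  rewrite !plus_INR. unfold Rdiv. f_equal. ring.
Qed.

Lemma absoft_0 lam : 0 <= lam -> absoft lam 0 = 0.
Proof.
  intro H. unfold absoft, soft.
  destruct (Rlt_dec lam 0); [lra|]. destruct (Rlt_dec 0 (- lam)); [lra|]. apply Rabs_R0.
Qed.

Lemma level_eq y lam a b l e : (1 <= a <= b)%nat -> 0 <= lam -> (1 <= e)%nat ->
  (b - a + 1 <= 2 ^ (l + e))%nat ->
  sumR (fun j => absoft lam (haar_detail (l + e) (pad0 y a b) l j)) 0 (2 ^ l) / sqrt (INR (2 ^ e))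
  = Wc y lam a e (b - a + 1) + Str y lam a b e.
Proof.
  intros Hab Hlam He HL.
  set (L := (b - a + 1)%nat) in *.
  assert (HLd : L = (b - a + 1)%nat) by reflexivity.
  set (s := (2 ^ e)%nat).
  assert (Hs : (0 < s)%nat) by (apply Nat.neq_0_lt_0, Nat.pow_nonzero; lia).
  assert (Hsm : (2 ^ (l + e) = 2 ^ l * s)%nat) by (apply Nat.pow_add_r).
  assert (HLm : (l + e - l = e)%nat) by lia.
  set (q := (L / s)%nat). set (r := (L mod s)%nat).
  assert (Hqr : (L = s * q + r)%nat) by (apply Nat.div_mod; lia).
  assert (Hr : (r < s)%nat) by (apply Nat.mod_upper_bound; lia).
  assert (Hq : (q <= 2 ^ l)%nat) by nia.
  rewrite sumR_div.
  replace (2 ^ l)%nat with (q + (2 ^ l - q))%nat by lia.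
  rewrite sumR_add. unfold Wc, Str. fold L. fold s. fold q. fold r.
  f_equal.
  - apply sumR_ext. intros j Hj.
    rewrite hd_HA by (try lia; rewrite HLm; fold s; nia).
    rewrite HLm. fold s.
    rewrite HA_HP; try lia; try reflexivity; nia.
  - destruct (Nat.eqb_spec r 0) as [Hr0|Hr0].
    + apply sumR_zero. intros j Hj.
      rewrite hd_zero by (try lia; rewrite HLm; fold s; nia).
      rewrite absoft_0 by lra. unfold Rdiv; ring.
    + assert (Hq2 : (q < 2 ^ l)%nat) by nia.
      replace (2 ^ l - q)%nat with (S (2 ^ l - q - 1)) by lia.
      rewrite sumR_S. rewrite (sumR_zero _ (S (0 + q))).
      * rewrite Rplus_0_r. rewrite hd_HA by (try lia; rewrite HLm; fold s; nia).
        rewrite HLm. fold s. replace (a - 1 + (0 + q) * s)%nat with (b - r)%nat by nia. reflexivity.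
      * intros j Hj. rewrite hd_zero by (try lia; rewrite HLm; fold s; nia).
        rewrite absoft_0 by lra. unfold Rdiv; ring.
Qed.

Lemma INR_pow2 l : INR (2 ^ l) = 2 ^ l.
Proof. rewrite pow_INR. simpl (INR 2). replace (1 + 1) with 2 by ring. reflexivity. Qed.

Lemma sqrt_pow2_pos l : 0 < sqrt (INR (2 ^ l)).
Proof. apply sqrt_lt_R0. rewrite INR_pow2. apply pow_lt. lra. Qed.

Lemma lhs_eq y lam a b m : (1 <= a <= b)%nat -> 0 <= lam -> (b - a + 1 <= 2 ^ m)%nat ->
  (1 / sqrt (INR (2 ^ m))) *
    sumR (fun l => sqrt (2 ^ l) *
       sumR (fun j => Rabs (soft lam (haar_detail m (pad0 y a b) l j))) 0 (2 ^ l)) 0 m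
  = sumR (fun e => Wc y lam a e (b - a + 1) + Str y lam a b e) 1 m.
Proof.
  intros Hab Hlam Hm.
  rewrite sumR_scal, <- sumR_rev. apply sumR_ext. intros l Hl.
  remember (m - l)%nat as e. assert (m = l + e)%nat by lia. subst m.
  rewrite <- (level_eq y lam a b l e) by (auto; lia).
  unfold absoft.
  rewrite Nat.pow_add_r, mult_INR, sqrt_mult by apply pos_INR.
  rewrite <- (INR_pow2 l).
  pose proof (sqrt_pow2_pos l). pose proof (sqrt_pow2_pos e).
  field. lra.
Qed.

Lemma test_eq sigma beta n y a b : (1 <= a <= b)%nat -> 0 < sigma ->
  let lam := sigma * sqrt (beta * ln (INR n)) in
  let m := Nat.log2_up (b - a + 1) in
  arrows_test sigma beta n y a b =
  if Rlt_dec (sigma / sqrt (INR (2 ^ m)))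
       (sumR (fun e => Wc y lam a e (b - a + 1)) 1 m + sumR (Str y lam a b) 1 m)
  then true else false.
Proof.
  intros Hab Hs lam m. unfold arrows_test, pad_exp. cbv zeta. fold lam. fold m.
  rewrite lhs_eq; auto.
  - rewrite sumR_plus. reflexivity.
  - unfold lam. apply Rmult_le_pos; [lra|apply sqrt_pos].
  - unfold m. apply Nat.log2_log2_up_spec. lia.
Qed.

Lemma Wc_step y lam a e L : (1 <= L)%nat ->
  Wc y lam a e L = Wc y lam a e (L - 1) +
    (if Nat.eqb (L mod 2 ^ e) 0
     then absoft lam (HP y e (a - 1 + (L / 2 ^ e - 1) * 2 ^ e)) / sqrt (INR (2 ^ e))
     else 0).
Proof.
  intro HL. unfold Wc.
  set (s := (2 ^ e)%nat).
  assert (Hs : (0 < s)%nat) by (apply Nat.neq_0_lt_0, Nat.pow_nonzero; lia).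
  set (q := (L / s)%nat). set (r := (L mod s)%nat).
  assert (Hqr : (L = s * q + r)%nat) by (apply Nat.div_mod; lia).
  assert (Hr : (r < s)%nat) by (apply Nat.mod_upper_bound; lia).
  destruct (Nat.eqb_spec r 0) as [Hr0|Hr0].
  - assert (Hq : (1 <= q)%nat) by nia.
    assert (E : ((L - 1) / s = q - 1)%nat).
    { symmetry; apply (Nat.div_unique _ _ _ (s - 1)); nia. }
    rewrite E. replace q with (S (q - 1)) at 1 by lia. rewrite sumR_snoc.
    reflexivity.
  - assert (E : ((L - 1) / s = q)%nat).
    { symmetry; apply (Nat.div_unique _ _ _ (r - 1)); nia. }
    rewrite E. ring.
Qed.

Lemma Wc_small y lam a e L : (L < 2 ^ e)%nat -> Wc y lam a e L = 0.
Proof. intro H. unfold Wc. rewrite Nat.div_small by exact H. reflexivity. Qed.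

Definition prog : list instr := [
  (*0*) RLn 12 0; (*1*) RMul 12 3 12; (*2*) RSqrt 12 12; (*3*) RMul 5 1 12;
  (*4*) RSub 6 4 5; (*5*) NConst 1 1; (*6*) NConst 2 1; (*7*) NConst 13 1;
  (*8*) JmpNLt 0 1 107; (*9*) Write 10; (*10*) Read 11; (*11*) NConst 8 20;
  (*12*) NAdd 8 8 1; (*13*) NConst 9 19; (*14*) NAdd 9 9 1; (*15*) RLoad 12 9;
  (*16*) RAdd 12 12 11; (*17*) RStore 8 12; (*18*) NSub 3 1 2; (*19*) NAdd 3 3 13;
  (*20*) NSub 15 2 13; (*21*) NConst 10 20; (*22*) NAdd 10 10 15; (*23*) RLoad 13 10;
  (*24*) RSub 14 12 13; (*25*) RofN 15 3; (*26*) RDiv 9 14 15; (*27*) RAdd 8 4 4;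
  (*28*) NConst 4 1; (*29*) NConst 6 21;
  (*30*) JmpNLt 4 3 32; (*31*) Jmp 95;
  (*32*) NAdd 5 4 4; (*33*) NAdd 11 4 13; (*34*) JmpNEq 11 3 37; (*35*) NLoad 7 6;
  (*36*) Jmp 38; (*37*) NSub 7 5 4;
  (*38*) NAdd 7 7 13; (*39*) JmpNEq 7 5 43; (*40*) NStore 6 7; (*41*) NSub 8 1 7;
  (*42*) Jmp 46; (*43*) NConst 7 0; (*44*) NStore 6 7; (*45*) NSub 8 1 5;
  (*46*) NAdd 9 8 4; (*47*) JmpNLt 1 9 49; (*48*) Jmp 50; (*49*) NAdd 9 1 12;
  (*50*) NConst 11 20; (*51*) NAdd 11 11 8; (*52*) RLoad 15 11; (*53*) RSub 15 15 13;
  (*54*) NSub 16 8 15; (*55*) RofN 16 16; (*56*) RMul 16 16 9; (*57*) RSub 15 15 16;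
  (*58*) NConst 11 20; (*59*) NAdd 11 11 9; (*60*) RLoad 17 11; (*61*) RSub 17 17 13;
  (*62*) NSub 16 9 15; (*63*) RofN 16 16; (*64*) RMul 16 16 9; (*65*) RSub 17 17 16;
  (*66*) NConst 11 20; (*67*) NAdd 11 11 1; (*68*) RLoad 18 11; (*69*) RSub 18 18 13;
  (*70*) NSub 16 1 15; (*71*) RofN 16 16; (*72*) RMul 16 16 9; (*73*) RSub 18 18 16;
  (*74*) RSub 19 18 17; (*75*) RSub 12 17 15; (*76*) RSub 19 19 12; (*77*) RofN 12 5;
  (*78*) RSqrt 12 12; (*79*) RDiv 19 19 12; (*80*) JmpRLt 5 19 84; (*81*) JmpRLt 19 6 86;
  (*82*) RAdd 19 4 4; (*83*) Jmp 87; (*84*) RSub 19 19 5; (*85*) Jmp 87;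
  (*86*) RSub 19 6 19; (*87*) RDiv 19 19 12; (*88*) JmpNEq 7 12 91; (*89*) RAdd 8 8 19;
  (*90*) Jmp 92; (*91*) RAdd 7 7 19; (*92*) NAdd 4 5 12; (*93*) NAdd 6 6 13;
  (*94*) Jmp 30;
  (*95*) RofN 12 4; (*96*) RSqrt 12 12; (*97*) RDiv 12 1 12; (*98*) RAdd 14 7 8;
  (*99*) JmpRLt 12 14 102; (*100*) RAdd 10 9 4; (*101*) Jmp 105;
  (*102*) NAdd 2 1 13; (*103*) RAdd 7 4 4; (*104*) RAdd 10 11 4;
  (*105*) NAdd 1 1 13; (*106*) Jmp 8; (*107*) Halt ].

Lemma prog_len : length prog = 108%nat.
Proof. reflexivity. Qed.


Fixpoint steps (y : nat -> R) (k : nat) (c : config) : option config :=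
  match k with
  | O => Some c
  | S k' => match step prog y c with None => None | Some c1 => steps y k' c1 end
  end.

Definition reach (y : nat -> R) (c c' : config) (B : nat) : Prop :=
  exists k, (k <= B)%nat /\ steps y k c = Some c'.

Lemma reach_refl y c B : reach y c c B.
Proof. exists 0%nat. split; [lia|reflexivity]. Qed.

Lemma steps_add y k1 k2 c c1 : steps y k1 c = Some c1 -> steps y (k1 + k2) c = steps y k2 c1.
Proof.
  revert c. induction k1; intros c H; simpl in *.
  - congruence.
  - destruct (step prog y c); [apply IHk1; auto|discriminate].
Qed.

Lemma reach_trans y c c1 c2 B1 B2 : reach y c c1 B1 -> reach y c1 c2 B2 -> reach y c c2 (B1 + B2).
Proof.
  intros [k1 [H1 E1]] [k2 [H2 E2]]. exists (k1 + k2)%nat. split; [lia|].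
  rewrite (steps_add _ _ _ _ _ E1). exact E2.
Qed.

Lemma reach_mono y c c1 B B' : (B <= B')%nat -> reach y c c1 B -> reach y c c1 B'.
Proof. intros H [k [Hk E]]. exists k; split; [lia|exact E]. Qed.

Lemma reach_S y c c1 c' B : step prog y c = Some c1 -> reach y c1 c' B -> reach y c c' (S B).
Proof.
  intros H [k [Hk E]]. exists (S k). split; [lia|]. simpl. rewrite H. exact E.
Qed.

Lemma run_reach y c c' B f : reach y c c' B -> step prog y c' = None -> (B < f)%nat ->
  run prog y f c = Some c'.
Proof.
  intros [k [Hk E]] Hn Hf. revert c f B Hk Hf E. induction k; intros c f B Hk Hf E.
  - simpl in E. inversion E; subst. destruct f; [lia|]. simpl. rewrite Hn. reflexivity.
  - simpl in E. destruct f; [lia|]. simpl. destruct (step prog y c) eqn:Es; [|discriminate].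
    apply (IHk c0 f (B - 1)%nat); [lia|lia|exact E].
Qed.

Definition lamv (sigma beta : R) (n : nat) : R := sigma * sqrt (beta * ln (INR n)).
Definition astate sigma beta n y t : nat := fst (arrows_state sigma beta n y t).
Definition OUTS sigma beta n y t : list (nat * R) :=
  map (fun i => ((i - 1)%nat, arrows_pred sigma beta n y i)) (seq 1 t).
Definition TL y lam n a L : R := sumR (fun e => Wc y lam a e L) 1 n.
Definition T7 y lam n a L e : R :=
  sumR (fun e' => if Nat.ltb e' e then Wc y lam a e' L else Wc y lam a e' (L - 1)) 1 n.

Definition Core n sigma beta y t a (c : config) : Prop :=
  nread c = t /\ outs c = OUTS sigma beta n y t /\
  nreg c 0 = n /\ nreg c 1 = t /\ nreg c 2 = a /\ nreg c 3 = (t - a + 1)%nat /\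
  nreg c 12 = 0%nat /\ nreg c 13 = 1%nat /\ nreg c 15 = (a - 1)%nat /\
  rreg c 1 = sigma /\ rreg c 4 = 0 /\ rreg c 5 = lamv sigma beta n /\
  rreg c 6 = 0 - lamv sigma beta n /\ rreg c 9 = meanR y a t /\ rreg c 11 = y t /\
  rreg c 13 = Pf y (a - 1) /\ (forall i, (i <= t)%nat -> rreg c (20 + i) = Pf y i).

Definition ArrN (L e : nat) (N : nat -> nat) : Prop :=
  (forall e', (1 <= e' < e)%nat -> N (20 + e')%nat = L mod 2 ^ e') /\
  (forall e', (e <= e')%nat -> (2 ^ (e' - 1) < L - 1)%nat -> N (20 + e')%nat = (L - 1) mod 2 ^ e').

Definition Pure sigma beta n y t a : Prop :=
  a = astate sigma beta n y (t - 1) /\ (1 <= a <= t)%nat /\ (t <= n)%nat.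

Definition Inv_in n sigma beta y t a e (c : config) : Prop :=
  pc c = 30%nat /\ Core n sigma beta y t a c /\ Pure sigma beta n y t a /\
  nreg c 4 = (2 ^ (e - 1))%nat /\ nreg c 6 = (20 + e)%nat /\
  ArrN (t - a + 1) e (nreg c) /\
  rreg c 7 = T7 y (lamv sigma beta n) n a (t - a + 1) e /\
  rreg c 8 = sumR (Str y (lamv sigma beta n) a t) 1 (e - 1) /\
  (1 <= e)%nat /\ (e - 1 <= Nat.log2_up (t - a + 1))%nat.

Definition Inv_out n sigma beta y t (c : config) : Prop :=
  let a := astate sigma beta n y (t - 1) in
  pc c = 8%nat /\ nread c = (t - 1)%nat /\ outs c = OUTS sigma beta n y (t - 1) /\
  nreg c 0 = n /\ nreg c 1 = t /\ nreg c 2 = a /\ nreg c 12 = 0%nat /\ nreg c 13 = 1%nat /\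
  (forall e, (1 <= e)%nat -> (2 ^ (e - 1) < t - a)%nat -> nreg c (20 + e)%nat = (t - a) mod 2 ^ e) /\
  rreg c 1 = sigma /\ rreg c 4 = 0 /\ rreg c 5 = lamv sigma beta n /\
  rreg c 6 = 0 - lamv sigma beta n /\
  rreg c 7 = TL y (lamv sigma beta n) n a (t - a) /\
  rreg c 10 = arrows_pred sigma beta n y t /\
  (forall i, (i <= t - 1)%nat -> rreg c (20 + i) = Pf y i) /\
  (1 <= t <= S n)%nat.

Lemma upd_eq {A} (f : nat -> A) i v : upd f i v i = v.
Proof. unfold upd. rewrite Nat.eqb_refl. reflexivity. Qed.
Lemma upd_neq {A} (f : nat -> A) i j v : i <> j -> upd f j v i = f i.
Proof. intro H. unfold upd. destruct (Nat.eqb_spec i j); [contradiction|reflexivity]. Qed.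

Lemma Core_frame n sigma beta y t a c c' :
  Core n sigma beta y t a c -> nread c' = nread c -> outs c' = outs c ->
  (forall i, In i [0;1;2;3;12;13;15]%nat -> nreg c' i = nreg c i) ->
  (forall i, In i [1;4;5;6;9;11;13]%nat \/ (20 <= i)%nat -> rreg c' i = rreg c i) ->
  Core n sigma beta y t a c'.
Proof.
  intros (H1&H2&H3&H4&H5&H6&H7&H8&H9&H10&H11&H12&H13&H14&H15&H16&H17) E1 E2 EN ER.
  unfold Core. rewrite E1, E2.
  rewrite !EN by (simpl; tauto). rewrite !ER by (simpl; tauto).
  repeat split; auto.
  intros i Hi. rewrite ER by lia. auto.
Qed.

Ltac stp := eapply reach_S; [reflexivity|]; cbn [exec upd pc nreg rreg nread outs Nat.eqb Nat.add].
Ltac pg := match goal with |- ?g => idtac g end.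
Ltac br := match goal with |- reach _ {| pc := if ?b then _ else _ |} _ _ =>
  first [ replace b with true by (symmetry; first [apply Nat.ltb_lt | apply Nat.eqb_eq]; lia)
        | replace b with false by (symmetry; first [apply Nat.ltb_ge | apply Nat.eqb_neq]; lia) ] end.
Ltac far := intros ?i ?Hi; repeat (rewrite upd_neq; [|lia]); reflexivity.
Ltac frameN := let i := fresh "i" in let Hi := fresh "Hi" in
  intros i Hi; simpl in Hi; repeat (destruct Hi as [<-|Hi]; [reflexivity|]); contradiction.
Ltac frameR := let i := fresh "i" in let Hi := fresh "Hi" in
  intros i [Hi|Hi]; [simpl in Hi; repeat (destruct Hi as [<-|Hi]; [reflexivity|]); contradiction
                    | cbn [rreg nreg]; repeat (rewrite upd_neq; [|lia]); reflexivity].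

Lemma init_ok n sigma delta beta y :
  exists c, reach y (init_config n sigma delta beta) c 8 /\ Inv_out n sigma beta y 1 c.
Proof.
  eexists. split.
  { unfold init_config. do 8 stp. apply reach_refl. }
  unfold Inv_out. cbv zeta. cbn [pc nreg rreg nread outs].
  assert (Ha : astate sigma beta n y (1 - 1) = 1%nat) by reflexivity.
  rewrite Ha.
  repeat split; cbn [upd Nat.eqb]; try reflexivity; try lia.
  - unfold TL. symmetry. apply sumR_zero. intros e He. apply Wc_small.
    pose proof (Nat.pow_nonzero 2 e). lia.
  - intros i Hi. assert (i = 0%nat) by lia. subst i. reflexivity.
Qed.

Lemma halt_ok n sigma beta y c : Inv_out n sigma beta y (S n) c ->
  exists c', reach y c c' 1 /\ step prog y c' = None /\ outs c' = OUTS sigma beta n y n.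
Proof.
  intros (Hpc & Hr & Ho & H0 & H1 & _).
  destruct c as [p N Rr r o]. cbn [pc nreg rreg nread outs] in *. subst p.
  eexists. split.
  { stp. br. apply reach_refl. }
  split; [reflexivity|]. cbn [outs]. rewrite Ho. f_equal. lia.
Qed.

Lemma astate_bounds sigma beta n y t : (1 <= astate sigma beta n y t <= S t)%nat.
Proof.
  unfold astate. induction t as [|t IH]; [simpl; lia|].
  simpl. destruct (arrows_state sigma beta n y t) as [th nb]. simpl in IH.
  destruct (arrows_test sigma beta n y th (S t)); simpl; lia.
Qed.

Lemma meanR_Pf y a t : (1 <= a <= t)%nat ->
  meanR y a t = (Pf y t - Pf y (a - 1)) / INR (t - a + 1).
Proof.
  intro H. unfold meanR. f_equal. unfold Pf.
  replace t with (a - 1 + (t - a + 1))%nat at 2 by lia.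
  rewrite (sumR_add y 1 (a - 1) (t - a + 1)). replace (1 + (a - 1))%nat with a by lia.
  rewrite (sumR_ext (y0 y) y). ring.
  intros i Hi. unfold y0. replace (Nat.eqb i 0) with false by (symmetry; apply Nat.eqb_neq; lia). reflexivity.
Qed.

Lemma entry_ok n sigma beta y t c : Inv_out n sigma beta y t c -> (t <= n)%nat ->
  exists c', reach y c c' 25 /\ Inv_in n sigma beta y t (astate sigma beta n y (t - 1)) 1 c'.
Proof.
  intros (Hpc & Hr & Ho & H0 & H1 & H2 & H12 & H13 & HA & R1 & R4 & R5 & R6 & R7 & R10 & HP & Ht) Htn.
  set (a := astate sigma beta n y (t - 1)) in *.
  assert (Ha : (1 <= a <= t)%nat) by (pose proof (astate_bounds sigma beta n y (t - 1)); unfold a; lia).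
  destruct c as [p N Rr r o]. cbn [pc nreg rreg nread outs] in *. subst p.
  eexists. split.
  { stp. br. do 21 stp. apply reach_refl. }
  assert (HPt : Rr (19 + t)%nat = Pf y (t - 1)) by (replace (19 + t)%nat with (20 + (t - 1))%nat by lia; apply HP; lia).
  assert (HPa : Rr (20 + (a - 1))%nat = Pf y (a - 1)) by (apply HP; lia).
  cbn [Nat.add] in HPt, HPa.
  unfold Inv_in, Core, ArrN, Pure. cbn [pc nreg rreg nread outs].
  rewrite ?H0, ?H1, ?H2, ?H12, ?H13, ?Hr, ?Ho.
  replace (S (t - 1)) with t by lia.
  assert (HAt : (a - 1 <> t)%nat) by lia.
  repeat split; cbn [upd Nat.eqb Nat.add]; rewrite ?R1, ?R4, ?R5, ?R6, ?R7; try reflexivity; try lia.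
  - unfold OUTS. rewrite R10. destruct t as [|t']; [lia|]. replace (S t' - 1)%nat with t' by lia.
    rewrite seq_S, map_app. simpl. replace (t' - 0)%nat with t' by lia. reflexivity.
  - repeat (rewrite upd_neq by lia). rewrite HPt, HPa. rewrite meanR_Pf by lia.
    replace (Pf y t) with (Pf y (S (t - 1))) by (f_equal; lia). rewrite Pf_S. replace (S (t - 1)) with t by lia. reflexivity.
  - repeat (rewrite upd_neq by lia). exact HPa.
  - intros i Hi. destruct (Nat.eq_dec i t) as [->|Hne].
    + rewrite upd_eq. rewrite HPt. replace (Pf y t) with (Pf y (S (t - 1))) by (f_equal; lia). rewrite Pf_S.
      replace (S (t - 1)) with t by lia. reflexivity.
    + repeat (rewrite upd_neq by lia). apply HP. lia.
  - intros e' He1 He2. replace (t - a + 1 - 1)%nat with (t - a)%nat by lia. apply HA; lia.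
  - unfold T7, TL. apply sumR_ext. intros e' He'.
    replace (Nat.ltb e' 1) with false by (symmetry; apply Nat.ltb_ge; lia).
    f_equal. lia.
  - replace (1 - 1)%nat with 0%nat by lia. rewrite sumR_0. ring.
Qed.

Lemma pred_next sigma beta n y t a : (1 <= t)%nat -> astate sigma beta n y (t - 1) = a ->
  astate sigma beta n y t = (if arrows_test sigma beta n y a t then S t else a) /\
  arrows_pred sigma beta n y (S t) = (if arrows_test sigma beta n y a t then y t else meanR y a t).
Proof.
  intros Ht Ha. unfold astate, arrows_pred in *. replace (S t - 1)%nat with t by lia.
  destruct t as [|t']; [lia|]. replace (S t' - 1)%nat with t' in Ha by lia.
  simpl. destruct (arrows_state sigma beta n y t') as [th nb]. simpl in Ha. subst th.
  destruct (arrows_test sigma beta n y a (S t')); simpl; auto.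
Qed.

Lemma TL_split y lam n a L m : (m <= n)%nat -> (L <= 2 ^ m)%nat ->
  TL y lam n a L = sumR (fun e => Wc y lam a e L) 1 m.
Proof.
  intros Hm HL. unfold TL. replace n with (m + (n - m))%nat by lia.
  rewrite sumR_add. rewrite (sumR_zero _ (1 + m)). ring.
  intros e' He'. apply Wc_small.
  assert (2 ^ m < 2 ^ e')%nat by (apply Nat.pow_lt_mono_r; lia). lia.
Qed.

Lemma T7_TL y lam n a L e : (1 <= e)%nat -> (L <= 2 ^ (e - 1))%nat ->
  T7 y lam n a L e = TL y lam n a L.
Proof.
  intros He HL. unfold T7, TL. apply sumR_ext. intros e' He'.
  destruct (Nat.ltb_spec e' e); [reflexivity|].
  rewrite !Wc_small; auto.
  - assert (2 ^ (e - 1) < 2 ^ e')%nat by (apply Nat.pow_lt_mono_r; lia). lia.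
  - assert (2 ^ (e - 1) < 2 ^ e')%nat by (apply Nat.pow_lt_mono_r; lia). lia.
Qed.

Lemma exit_ok n sigma beta y t a e c : 0 < sigma -> Inv_in n sigma beta y t a e c ->
  (t - a + 1 <= 2 ^ (e - 1))%nat ->
  exists c', reach y c c' 15 /\ Inv_out n sigma beta y (S t) c'.
Proof.
  intros Hsig (Hpc & (Hr & Ho & H0 & H1 & H2 & H3 & H12 & H13 & H15 & R1 & R4 & R5 & R6 & R9 & R11 & R13 & HP)
          & (Ha & Hat & Htn) & H4 & H6 & (HA1 & HA2) & R7 & R8 & He & Hlog) HL.
  set (L := (t - a + 1)%nat) in *.
  assert (HLd : L = (t - a + 1)%nat) by reflexivity.
  assert (Hm : Nat.log2_up L = (e - 1)%nat).
  { apply Nat.le_antisymm; auto. apply Nat.log2_up_le_pow2; lia. }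
  assert (HmL : (Nat.log2_up L <= L)%nat).
  { apply Nat.log2_up_le_pow2; [lia|]. apply Nat.lt_le_incl, Nat.pow_gt_lin_r. lia. }
  destruct (pred_next sigma beta n y t a) as [Hst Hpr]; [lia|auto|].
  pose proof (test_eq sigma beta n y a t) as TE.
  destruct c as [p N Rr r o]. cbn [pc nreg rreg nread outs] in *. subst p.
  assert (Hsum : Rr 7%nat + Rr 8%nat =
     sumR (fun e0 => Wc y (lamv sigma beta n) a e0 (t - a + 1)) 1 (Nat.log2_up (t - a + 1)) +
     sumR (Str y (lamv sigma beta n) a t) 1 (Nat.log2_up (t - a + 1))).
  { rewrite R7, R8. fold L. rewrite Hm. rewrite T7_TL by lia. rewrite (TL_split _ _ _ _ _ (e - 1)); auto; lia. }
  set (X := sigma / sqrt (INR (2 ^ (e - 1)))) in *.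
  set (Y := sumR (fun e0 => Wc y (lamv sigma beta n) a e0 (t - a + 1)) 1 (Nat.log2_up (t - a + 1)) +
     sumR (Str y (lamv sigma beta n) a t) 1 (Nat.log2_up (t - a + 1))) in *.
  assert (TE' : arrows_test sigma beta n y a t = if Rlt_dec X Y then true else false).
  { specialize (TE ltac:(lia) Hsig). cbv zeta in TE. rewrite TE. unfold X, Y, lamv. fold L. rewrite Hm. reflexivity. }
  destruct (Rlt_dec X Y) as [Hlt|Hge].
  - rewrite TE' in Hst, Hpr.
    eexists. split.
    { stp. br. stp. do 4 stp. rewrite R1, H4, Hsum. stp.
      fold X; destruct (Rlt_dec X Y); [|contradiction]. do 5 stp. apply reach_refl. }
    unfold Inv_out. cbv zeta. cbn [pc nreg rreg nread outs]. replace (S t - 1)%nat with t by lia.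
    rewrite Hst. rewrite ?H0, ?H1, ?H2, ?H12, ?H13.
    repeat split; cbn [upd Nat.eqb Nat.add]; rewrite ?H0, ?H1, ?H2, ?H12, ?H13, ?R1, ?R4, ?R5, ?R6, ?R9, ?R11; try reflexivity; try lia.
    + exact Ho.
    + symmetry. unfold TL. replace (S t - S t)%nat with 0%nat by lia. rewrite Rplus_0_r.
      apply sumR_zero. intros. apply Wc_small. pose proof (Nat.pow_nonzero 2 i). lia.
    + rewrite Hpr. ring.
    + intros i Hi. apply HP. lia.
  - rewrite TE' in Hst, Hpr.
    eexists. split.
    { stp. br. stp. do 4 stp. rewrite R1, H4, Hsum. stp.
      fold X; destruct (Rlt_dec X Y); [contradiction|]. do 4 stp. apply reach_refl. }
    unfold Inv_out. cbv zeta. cbn [pc nreg rreg nread outs]. replace (S t - 1)%nat with t by lia.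
    rewrite Hst. rewrite ?H0, ?H1, ?H2, ?H12, ?H13.
    repeat split; cbn [upd Nat.eqb Nat.add]; rewrite ?H0, ?H1, ?H2, ?H12, ?H13, ?R1, ?R4, ?R5, ?R6, ?R9, ?R11; try reflexivity; try lia.
    + exact Ho.
    + intros e' He1 He2. destruct (Nat.ltb_spec e' e).
      * replace (S t - a)%nat with L by lia. apply HA1. lia.
      * assert (2 ^ (e - 1) <= 2 ^ (e' - 1))%nat by (apply Nat.pow_le_mono_r; lia). lia.
    + rewrite R7. rewrite T7_TL by lia. f_equal. lia.
    + rewrite Hpr. ring.
    + intros i Hi. apply HP. lia.
Qed.

Definition X0 (L e t : nat) : nat :=
  (t - (if Nat.eqb (L mod 2 ^ e) 0 then 2 ^ e else L mod 2 ^ e))%nat.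

Definition M46 n sigma beta y t a e (c : config) : Prop :=
  pc c = 46%nat /\ Core n sigma beta y t a c /\ Pure sigma beta n y t a /\
  nreg c 4 = (2 ^ (e - 1))%nat /\ nreg c 5 = (2 ^ e)%nat /\ nreg c 6 = (20 + e)%nat /\
  nreg c 7 = ((t - a + 1) mod 2 ^ e)%nat /\ nreg c 8 = X0 (t - a + 1) e t /\
  ArrN (t - a + 1) (S e) (nreg c) /\
  rreg c 7 = T7 y (lamv sigma beta n) n a (t - a + 1) e /\
  rreg c 8 = sumR (Str y (lamv sigma beta n) a t) 1 (e - 1) /\
  (1 <= e)%nat /\ (2 ^ (e - 1) < t - a + 1)%nat.

Definition M87 n sigma beta y t a e (c : config) : Prop :=
  pc c = 87%nat /\ Core n sigma beta y t a c /\ Pure sigma beta n y t a /\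
  nreg c 4 = (2 ^ (e - 1))%nat /\ nreg c 5 = (2 ^ e)%nat /\ nreg c 6 = (20 + e)%nat /\
  nreg c 7 = ((t - a + 1) mod 2 ^ e)%nat /\
  ArrN (t - a + 1) (S e) (nreg c) /\
  rreg c 7 = T7 y (lamv sigma beta n) n a (t - a + 1) e /\
  rreg c 8 = sumR (Str y (lamv sigma beta n) a t) 1 (e - 1) /\
  rreg c 12 = sqrt (INR (2 ^ e)) /\
  rreg c 19 = absoft (lamv sigma beta n) (HA y a t (meanR y a t) e (X0 (t - a + 1) e t)) /\
  (1 <= e)%nat /\ (2 ^ (e - 1) < t - a + 1)%nat.

Lemma mod_succ x s : (0 < s)%nat ->
  (x mod s + 1 = s -> (x + 1) mod s = 0)%nat /\
  (x mod s + 1 <> s -> (x + 1) mod s = x mod s + 1)%nat.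
Proof.
  intro Hs. pose proof (Nat.div_mod x s ltac:(lia)) as E.
  pose proof (Nat.mod_upper_bound x s ltac:(lia)) as U.
  split; intro H.
  - replace (x + 1)%nat with ((x / s + 1) * s)%nat by lia. apply Nat.Div0.mod_mul.
  - symmetry. apply (Nat.mod_unique _ _ (x / s)); lia.
Qed.

Ltac fin46 := unfold M46, ArrN; cbn [pc nreg rreg nread outs];
  match goal with H6 : _ = (20 + _)%nat |- _ => rewrite H6 end; cbn [upd Nat.eqb Nat.add];
  match goal with Hcore : Core _ _ _ _ _ _ _, Hpure : Pure _ _ _ _ _ _ |- _ =>
    refine (conj eq_refl (conj _ (conj Hpure _))); [apply (Core_frame _ _ _ _ _ _ _ _ Hcore); [reflexivity|reflexivity| frameN | frameR]|] end;
  repeat split.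

Ltac fin46b e :=
  first
  [ assumption | lia
  | let e' := fresh "e'" in let He' := fresh "He'" in
      intros e' He'; assert (He'' : (1 <= e' < S e)%nat) by exact He';
      destruct (Nat.eq_dec e' e) as [->|Hne];
      [ rewrite upd_eq; lia
      | rewrite upd_neq by lia; cbn [upd Nat.eqb Nat.add];
        match goal with |- ?F _ = _ => transitivity (F (20 + e')%nat); [reflexivity|] end;
        match goal with HA1 : forall _, _ |- _ => apply HA1; lia end ]
  | let e' := fresh "e'" in let He' := fresh "He'" in let He2 := fresh "He2" in
      intros e' He' He2; assert (He'' : (S e <= e')%nat) by exact He';
      rewrite upd_neq by lia; cbn [upd Nat.eqb Nat.add];
        match goal with |- ?F _ = _ => transitivity (F (20 + e')%nat); [reflexivity|] end;
        match goal with HA2 : forall _, _ |- _ => apply HA2; lia end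
  | unfold X0;
      match goal with Hmv : (_ mod 2 ^ e = _)%nat |- _ => rewrite Hmv end;
      first [ rewrite (proj2 (Nat.eqb_eq _ _)) by lia | rewrite (proj2 (Nat.eqb_neq _ _)) by lia]; lia
  ].

Lemma seg1 n sigma beta y t a e c : Inv_in n sigma beta y t a e c ->
  (2 ^ (e - 1) < t - a + 1)%nat ->
  exists c', reach y c c' 14 /\ M46 n sigma beta y t a e c'.
Proof.
  intros (Hpc & Hcore & Hpure & H4 & H6 & (HA1 & HA2) & R7 & R8 & He & Hlog) HL.
  pose proof Hcore as (Hr & Ho & H0 & H1 & H2 & H3 & H12 & H13 & H15 & _).
  set (L := (t - a + 1)%nat) in *.
  assert (HLd : L = (t - a + 1)%nat) by reflexivity.
  set (h := (2 ^ (e - 1))%nat) in *.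
  assert (Hhd : h = (2 ^ (e - 1))%nat) by reflexivity.
  assert (Hs : (2 ^ e = h + h)%nat) by (apply pow2_pred; lia).
  assert (Hh : (0 < h)%nat) by (pose proof (Nat.pow_nonzero 2 (e - 1)); lia).
  destruct c as [p N Rr r o]. cbn [pc nreg rreg nread outs] in *. subst p.
  destruct (Nat.eqb_spec (h + 1) L) as [Hnew|Hold].
  - (* new level: (L-1) mod 2^e = h *)
    assert (Hr0 : ((L - 1) mod 2 ^ e = h)%nat) by (rewrite Hs; replace (L - 1)%nat with h by lia; apply Nat.mod_small; lia).
    destruct (Nat.eqb_spec (h + 1) (h + h)) as [Hc|Hc].
    + assert (Hmv : ((t - a + 1) mod 2 ^ e = 0)%nat).
      { replace (t - a + 1)%nat with (L - 1 + 1)%nat by lia. apply (mod_succ (L - 1) (2 ^ e)); lia. }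
      eexists. split.
      { stp. br. do 3 stp. br. do 3 stp. br. do 3 stp. apply reach_refl. }
      fin46. all: try fin46b e.
    + assert (Hmv : ((t - a + 1) mod 2 ^ e = h + 1)%nat).
      { replace (t - a + 1)%nat with (L - 1 + 1)%nat by lia. rewrite (proj2 (mod_succ (L - 1) (2 ^ e) ltac:(lia))); lia. }
      eexists. split.
      { stp. br. do 3 stp. br. do 3 stp. br. do 3 stp. apply reach_refl. }
      fin46. all: try fin46b e.
  - assert (HN : N (20 + e)%nat = ((L - 1) mod 2 ^ e)%nat).
    { apply HA2; lia. }
    cbn [Nat.add] in HN.
    pose proof (Nat.mod_upper_bound (L - 1) (2 ^ e) ltac:(lia)) as Hub.
    destruct (Nat.eqb_spec ((L - 1) mod 2 ^ e + 1) (2 ^ e)) as [Hc|Hc].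
    + assert (Hmv : ((t - a + 1) mod 2 ^ e = 0)%nat).
      { replace (t - a + 1)%nat with (L - 1 + 1)%nat by lia. apply (mod_succ (L - 1) (2 ^ e)); lia. }
      eexists. split.
      { stp. br. do 3 stp. br. stp. rewrite H6; cbn [upd Nat.eqb Nat.add]. do 3 stp. br. do 3 stp. apply reach_refl. }
      fin46. all: try fin46b e. all: pg.
    + assert (Hmv : ((t - a + 1) mod 2 ^ e = (L - 1) mod 2 ^ e + 1)%nat).
      { replace (t - a + 1)%nat with (L - 1 + 1)%nat by lia. rewrite (proj2 (mod_succ (L - 1) (2 ^ e) ltac:(lia))); lia. }
      eexists. split.
      { stp. br. do 3 stp. br. stp. rewrite H6; cbn [upd Nat.eqb Nat.add]. do 3 stp. br. do 3 stp. apply reach_refl. }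
      fin46. all: try fin46b e. all: pg.
Qed.

Definition Mid n sigma beta y t a e p v (c : config) : Prop :=
  pc c = p /\ Core n sigma beta y t a c /\ Pure sigma beta n y t a /\
  nreg c 4 = (2 ^ (e - 1))%nat /\ nreg c 5 = (2 ^ e)%nat /\ nreg c 6 = (20 + e)%nat /\
  nreg c 7 = ((t - a + 1) mod 2 ^ e)%nat /\
  ArrN (t - a + 1) (S e) (nreg c) /\
  rreg c 7 = T7 y (lamv sigma beta n) n a (t - a + 1) e /\
  rreg c 8 = sumR (Str y (lamv sigma beta n) a t) 1 (e - 1) /\
  rreg c 12 = sqrt (INR (2 ^ e)) /\ rreg c 19 = v /\
  (1 <= e)%nat /\ (2 ^ (e - 1) < t - a + 1)%nat.

Definition coefv y t a e : R := HA y a t (meanR y a t) e (X0 (t - a + 1) e t).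

Lemma X0_facts L e t : (1 <= e)%nat -> (1 <= L <= t)%nat ->
  (t - L <= X0 L e t < t)%nat /\ (t <= X0 L e t + 2 ^ e)%nat.
Proof.
  intros He HL. unfold X0.
  assert (Hs : (0 < 2 ^ e)%nat) by (pose proof (Nat.pow_nonzero 2 e); lia).
  pose proof (Nat.div_mod L (2 ^ e) ltac:(lia)) as E.
  pose proof (Nat.mod_upper_bound L (2 ^ e) ltac:(lia)) as U.
  destruct (Nat.eqb_spec (L mod 2 ^ e) 0) as [H0|H0].
  - assert (1 <= L / 2 ^ e)%nat by nia. nia.
  - assert (L mod 2 ^ e <= L)%nat by (apply Nat.Div0.mod_le). lia.
Qed.

Lemma seg2a n sigma beta y t a e c : M46 n sigma beta y t a e c ->
  exists c', reach y c c' 34 /\ Mid n sigma beta y t a e 80 (coefv y t a e) c'.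
Proof.
  intros (Hpc & Hcore & Hpure & H4 & H5 & H6 & H7 & H8 & HA & R7 & R8 & He & HL).
  pose proof Hcore as (Hr & Ho & H0 & H1 & H2 & H3 & H12 & H13 & H15 & R1 & R4 & R5 & R6 & R9 & R11 & R13 & HP).
  pose proof Hpure as (Ha & Hat & Htn).
  destruct (X0_facts (t - a + 1) e t) as [Hx1 Hx2]; [lia|lia|].
  unfold coefv. set (x0 := X0 (t - a + 1) e t) in *.
  assert (Hs : (2 ^ e = 2 ^ (e - 1) + 2 ^ (e - 1))%nat) by (apply pow2_pred; lia).
  destruct c as [p N Rr r o]. cbn [pc nreg rreg nread outs] in *. subst p.
  assert (HP0 : Rr (20 + x0)%nat = Pf y x0) by (apply HP; lia).
  assert (HPt : Rr (20 + t)%nat = Pf y t) by (apply HP; lia).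
  destruct (Nat.ltb_spec t (x0 + 2 ^ (e - 1))) as [Hc|Hc].
  - eexists. split.
    { stp. stp. br. stp. do 30 stp. apply reach_refl. }
    unfold Mid. cbn [pc nreg rreg nread outs].
    rewrite ?H1, ?H4, ?H5, ?H8, ?H12, ?H13, ?H15.
    replace (t + 0)%nat with t by lia.
    cbn [upd Nat.eqb Nat.add] in HP0, HPt |- *.
    refine (conj eq_refl (conj _ (conj Hpure _))).
    { apply (Core_frame _ _ _ _ _ _ _ _ Hcore); [reflexivity|reflexivity| frameN | frameR]. }
    destruct HA as [HA1 HA2].
    repeat split; try assumption.
    rewrite HP0, HPt, R13, R9. unfold HA, Gm.
    rewrite (Nat.min_r (x0 + 2 ^ e) t) by lia. rewrite (Nat.min_r (x0 + 2 ^ (e - 1)) t) by lia.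
    reflexivity.
  - assert (HP1 : Rr (20 + (x0 + 2 ^ (e - 1)))%nat = Pf y (x0 + 2 ^ (e - 1))) by (apply HP; lia).
    eexists. split.
    { stp. stp. br. stp. do 30 stp. apply reach_refl. }
    unfold Mid. cbn [pc nreg rreg nread outs].
    rewrite ?H1, ?H4, ?H5, ?H8, ?H12, ?H13, ?H15.
    cbn [upd Nat.eqb Nat.add] in HP0, HPt, HP1 |- *.
    refine (conj eq_refl (conj _ (conj Hpure _))).
    { apply (Core_frame _ _ _ _ _ _ _ _ Hcore); [reflexivity|reflexivity| frameN | frameR]. }
    destruct HA as [HA1 HA2].
    repeat split; try assumption.
    rewrite HP0, HPt, HP1, R13, R9. unfold HA, Gm.
    rewrite (Nat.min_r (x0 + 2 ^ e) t) by lia. rewrite (Nat.min_l (x0 + 2 ^ (e - 1)) t) by lia.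
    reflexivity.
Qed.

Lemma absoft_pos lam x : lam < x -> absoft lam x = x - lam.
Proof. intro H. unfold absoft, soft. destruct (Rlt_dec lam x); [|contradiction]. apply Rabs_right. lra. Qed.
Lemma absoft_neg lam x : ~ lam < x -> x < 0 - lam -> absoft lam x = (0 - lam) - x.
Proof.
  intros H1 H2. unfold absoft, soft. destruct (Rlt_dec lam x); [contradiction|].
  destruct (Rlt_dec x (- lam)); [|lra]. rewrite Rabs_left by lra. lra.
Qed.
Lemma absoft_mid lam x : ~ lam < x -> ~ x < 0 - lam -> absoft lam x = 0 + 0.
Proof.
  intros H1 H2. unfold absoft, soft. destruct (Rlt_dec lam x); [contradiction|].
  destruct (Rlt_dec x (- lam)); [lra|]. rewrite Rabs_R0. ring.
Qed.

Ltac finMid := unfold Mid; cbn [pc nreg rreg nread outs];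
  match goal with Hcore : Core _ _ _ _ _ _ _, Hpure : Pure _ _ _ _ _ _ |- _ =>
    refine (conj eq_refl (conj _ (conj Hpure _))); [apply (Core_frame _ _ _ _ _ _ _ _ Hcore); [reflexivity|reflexivity| frameN | frameR]|] end;
  repeat split; try assumption.

Lemma seg2b n sigma beta y t a e v c : Mid n sigma beta y t a e 80 v c ->
  exists c', reach y c c' 5 /\ Mid n sigma beta y t a e 87 (absoft (lamv sigma beta n) v) c'.
Proof.
  intros (Hpc & Hcore & Hpure & H4 & H5 & H6 & H7 & (HA1 & HA2) & R7 & R8 & R12 & R19 & He & HL).
  pose proof Hcore as (Hr & Ho & H0 & H1 & H2 & H3 & H12 & H13 & H15 & R1 & R4 & R5 & R6 & _).
  destruct c as [p N Rr r o]. cbn [pc nreg rreg nread outs] in *. subst p.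
  destruct (Rlt_dec (Rr 5%nat) (Rr 19%nat)) as [Hc1|Hc1].
  - eexists. split.
    { stp. destruct (Rlt_dec (Rr 5%nat) (Rr 19%nat)); [|contradiction]. do 2 stp. apply reach_refl. }
    finMid. rewrite R5, R19 in *. rewrite absoft_pos by assumption. reflexivity.
  - destruct (Rlt_dec (Rr 19%nat) (Rr 6%nat)) as [Hc2|Hc2].
    + eexists. split.
      { stp. destruct (Rlt_dec (Rr 5%nat) (Rr 19%nat)); [contradiction|].
        stp. destruct (Rlt_dec (Rr 19%nat) (Rr 6%nat)); [|contradiction]. stp. apply reach_refl. }
      finMid. rewrite R5, R6, R19 in *. rewrite absoft_neg by assumption. reflexivity.
    + eexists. split.
      { stp. destruct (Rlt_dec (Rr 5%nat) (Rr 19%nat)); [contradiction|].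
        stp. destruct (Rlt_dec (Rr 19%nat) (Rr 6%nat)); [contradiction|]. do 2 stp. apply reach_refl. }
      finMid. rewrite R5, R6, R19, R4 in *. rewrite absoft_mid by assumption. reflexivity.
Qed.

Lemma T7_step y lam n a L e : (1 <= e <= n)%nat ->
  T7 y lam n a L (S e) = T7 y lam n a L e + (Wc y lam a e L - Wc y lam a e (L - 1)).
Proof.
  intro He. unfold T7.
  pose proof (sumR_point (fun e' => if Nat.ltb e' e then Wc y lam a e' L else Wc y lam a e' (L - 1))
                         (Wc y lam a e L) e 1 n ltac:(lia)) as E.
  cbv beta in E. rewrite Nat.ltb_irrefl in E. rewrite <- E.
  apply sumR_ext. intros e' He'.
  destruct (Nat.eqb_spec e' e) as [->|Hne].
  - replace (Nat.ltb e (S e)) with true by (symmetry; apply Nat.ltb_lt; lia). reflexivity.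
  - destruct (Nat.ltb_spec e' (S e)); destruct (Nat.ltb_spec e' e); try reflexivity; lia.
Qed.

Lemma seg3 n sigma beta y t a e c :
  Mid n sigma beta y t a e 87 (absoft (lamv sigma beta n) (coefv y t a e)) c ->
  exists c', reach y c c' 8 /\ Inv_in n sigma beta y t a (S e) c'.
Proof.
  intros (Hpc & Hcore & Hpure & H4 & H5 & H6 & H7 & (HA1 & HA2) & R7 & R8 & R12 & R19 & He & HL).
  pose proof Hcore as (Hr & Ho & H0 & H1 & H2 & H3 & H12 & H13 & H15 & R1 & R4 & R5 & R6 & _).
  pose proof Hpure as (Ha & Hat & Htn).
  set (L := (t - a + 1)%nat) in *.
  assert (HLd : L = (t - a + 1)%nat) by reflexivity.
  assert (Hlog : (e - 1 < Nat.log2_up L)%nat) by (apply Nat.log2_up_lt_pow2; lia).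
  assert (HmL : (Nat.log2_up L <= L)%nat).
  { apply Nat.log2_up_le_pow2; [lia|]. apply Nat.lt_le_incl, Nat.pow_gt_lin_r. lia. }
  assert (Hs : (0 < 2 ^ e)%nat) by (pose proof (Nat.pow_nonzero 2 e); lia).
  pose proof (Nat.div_mod L (2 ^ e) ltac:(lia)) as EL.
  pose proof (Nat.mod_upper_bound L (2 ^ e) ltac:(lia)) as UL.
  assert (HT : T7 y (lamv sigma beta n) n a L (S e) = T7 y (lamv sigma beta n) n a L e +
     (if Nat.eqb (L mod 2 ^ e) 0
      then absoft (lamv sigma beta n) (HP y e (a - 1 + (L / 2 ^ e - 1) * 2 ^ e)) / sqrt (INR (2 ^ e))
      else 0)).
  { rewrite (T7_step _ _ _ _ _ e) by lia. rewrite (Wc_step _ _ _ e L) by lia. ring. }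
  assert (HS : sumR (Str y (lamv sigma beta n) a t) 1 (S e - 1) =
               sumR (Str y (lamv sigma beta n) a t) 1 (e - 1) + Str y (lamv sigma beta n) a t e).
  { replace (S e - 1)%nat with (S (e - 1)) by lia. rewrite sumR_snoc.
    replace (1 + (e - 1))%nat with e by lia. reflexivity. }
  assert (HStr : Str y (lamv sigma beta n) a t e = if Nat.eqb (L mod 2 ^ e) 0 then 0 else
     absoft (lamv sigma beta n) (HA y a t (meanR y a t) e (t - L mod 2 ^ e)) / sqrt (INR (2 ^ e)))
    by reflexivity.
  unfold coefv, X0 in R19. fold L in R19.
  destruct c as [p N Rr r o]. cbn [pc nreg rreg nread outs] in *. subst p.
  destruct (Nat.eqb_spec (L mod 2 ^ e) 0) as [Hm|Hm].
  - eexists. split.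
    { stp. stp. br. do 4 stp. apply reach_refl. }
    unfold Inv_in, ArrN. cbn [pc nreg rreg nread outs].
    refine (conj eq_refl (conj _ (conj Hpure _))).
    { apply (Core_frame _ _ _ _ _ _ _ _ Hcore); [reflexivity|reflexivity| frameN | frameR]. }
    cbn [upd Nat.eqb Nat.add].
    repeat split; try assumption; try lia.
    + rewrite H5, H12. replace (S e - 1)%nat with e by lia. lia.
    + change (t - a + 1)%nat with L. rewrite HT, R7, R19, R12.
      assert (HLs : (2 ^ e <= L)%nat) by (rewrite Hm in EL; destruct (L / 2 ^ e)%nat; lia). rewrite HA_HP by lia. replace (a - 1 + (L / 2 ^ e - 1) * 2 ^ e)%nat with (t - 2 ^ e)%nat; [reflexivity|]. rewrite Hm in EL. remember (L / 2 ^ e)%nat as q. remember (2 ^ e)%nat as s. nia.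
    + rewrite HS, HStr, R8. cbn [Nat.eqb]. ring.
    + change (t - a + 1)%nat with L. lia.
  - eexists. split.
    { stp. stp. br. do 5 stp. apply reach_refl. }
    unfold Inv_in, ArrN. cbn [pc nreg rreg nread outs].
    refine (conj eq_refl (conj _ (conj Hpure _))).
    { apply (Core_frame _ _ _ _ _ _ _ _ Hcore); [reflexivity|reflexivity| frameN | frameR]. }
    cbn [upd Nat.eqb Nat.add].
    repeat split; try assumption; try lia.
    + rewrite H5, H12. replace (S e - 1)%nat with e by lia. lia.
    + change (t - a + 1)%nat with L. rewrite HT, R7. ring.
    + rewrite HS, HStr, R8, R19, R12. reflexivity.
    + change (t - a + 1)%nat with L. lia.
Qed.

Lemma body_ok n sigma beta y t a e c : Inv_in n sigma beta y t a e c ->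
  (2 ^ (e - 1) < t - a + 1)%nat ->
  exists c', reach y c c' 61 /\ Inv_in n sigma beta y t a (S e) c'.
Proof.
  intros H HL.
  destruct (seg1 _ _ _ _ _ _ _ _ H HL) as [c1 [R1 M1]].
  destruct (seg2a _ _ _ _ _ _ _ _ M1) as [c2 [R2 M2]].
  destruct (seg2b _ _ _ _ _ _ _ _ _ M2) as [c3 [R3 M3]].
  destruct (seg3 _ _ _ _ _ _ _ _ M3) as [c4 [R4 M4]].
  exists c4. split; [|exact M4].
  replace 61%nat with (14 + 34 + 5 + 8)%nat by reflexivity.
  eapply reach_trans; [eapply reach_trans; [eapply reach_trans|]|]; eauto.
Qed.

Lemma loop_ok n sigma beta y t a : 0 < sigma -> forall d e c, Inv_in n sigma beta y t a e c ->
  (Nat.log2_up (t - a + 1) + 1 - e = d)%nat ->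
  exists c', reach y c c' (61 * d + 15) /\ Inv_out n sigma beta y (S t) c'.
Proof.
  intros Hsig d. induction d as [|d IH]; intros e c H Hd.
  - destruct (Nat.lt_ge_cases (2 ^ (e - 1)) (t - a + 1)) as [HL|HL].
    + exfalso. pose proof H as (_ & _ & (_ & Hat & _) & _ & _ & _ & _ & _ & He & _).
      assert (e - 1 < Nat.log2_up (t - a + 1))%nat by (apply Nat.log2_up_lt_pow2; lia). lia.
    + destruct (exit_ok _ _ _ _ _ _ _ _ Hsig H HL) as [c' [R' M']]. exists c'. split; [|exact M'].
      eapply reach_mono; [|exact R']. lia.
  - destruct (Nat.lt_ge_cases (2 ^ (e - 1)) (t - a + 1)) as [HL|HL].
    + destruct (body_ok _ _ _ _ _ _ _ _ H HL) as [c1 [R1 M1]].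
      pose proof H as (_ & _ & (_ & Hat & _) & _ & _ & _ & _ & _ & He & _).
      destruct (IH (S e) c1 M1) as [c2 [R2 M2]]; [lia|].
      exists c2. split; [|exact M2].
      replace (61 * S d + 15)%nat with (61 + (61 * d + 15))%nat by lia.
      eapply reach_trans; eauto.
    + destruct (exit_ok _ _ _ _ _ _ _ _ Hsig H HL) as [c' [R' M']]. exists c'. split; [|exact M'].
      eapply reach_mono; [|exact R']. lia.
Qed.

Definition STEP (n : nat) : nat := (40 + 61 * (Nat.log2_up n + 1))%nat.

Lemma step_ok n sigma beta y t c : 0 < sigma -> Inv_out n sigma beta y t c -> (t <= n)%nat ->
  exists c', reach y c c' (STEP n) /\ Inv_out n sigma beta y (S t) c'.
Proof.
  intros Hsig H Ht.
  destruct (entry_ok _ _ _ _ _ _ H Ht) as [c1 [R1 M1]].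
  pose proof M1 as (_ & _ & (_ & Hat & _) & _).
  set (a := astate sigma beta n y (t - 1)) in *.
  destruct (loop_ok n sigma beta y t a Hsig _ 1 c1 M1 eq_refl) as [c2 [R2 M2]].
  exists c2. split; [|exact M2].
  assert (Nat.log2_up (t - a + 1) <= Nat.log2_up n)%nat by (apply Nat.log2_up_le_mono; lia).
  unfold STEP. eapply reach_mono; [|eapply reach_trans; [exact R1|exact R2]]. lia.
Qed.

Lemma outer_ok n sigma beta y : 0 < sigma -> forall k t c, Inv_out n sigma beta y t c ->
  (t + k = S n)%nat -> exists c', reach y c c' (k * STEP n) /\ Inv_out n sigma beta y (S n) c'.
Proof.
  intros Hsig k. induction k as [|k IH]; intros t c H Hk.
  - exists c. split; [apply reach_refl|]. replace (S n) with t by lia. exact H.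
  - destruct (step_ok _ _ _ _ _ _ Hsig H) as [c1 [R1 M1]]; [lia|].
    destruct (IH (S t) c1 M1) as [c2 [R2 M2]]; [lia|].
    exists c2. split; [|exact M2]. replace (S k * STEP n)%nat with (STEP n + k * STEP n)%nat by lia.
    eapply reach_trans; eauto.
Qed.

Theorem proposition3 :
  exists (P : list instr) (C n0 : nat),
    forall (n : nat) (sigma delta beta : R) (y : nat -> R),
      (n0 <= n)%nat -> 0 < sigma -> 0 < delta <= 1 -> 24 < beta ->
      exists fin : config,
        run P y (S (C * n * Nat.log2 n)) (init_config n sigma delta beta) = Some fin /\
        map snd (outs fin) = arrows_predictions sigma beta n y /\
        (forall (i : nat) (o : nat * R), nth_error (outs fin) i = Some o -> (fst o <= i)%nat).
Proof.
  exists prog, 300%nat, 2%nat.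
  intros n sigma delta beta y Hn Hsig Hdel Hbeta.
  destruct (init_ok n sigma delta beta y) as [c1 [R1 M1]].
  destruct (outer_ok n sigma beta y Hsig n 1 c1 M1 ltac:(lia)) as [c2 [R2 M2]].
  destruct (halt_ok _ _ _ _ _ M2) as [c3 [R3 [Hst Ho]]].
  exists c3. split; [|split].
  - eapply run_reach; [eapply reach_trans; [eapply reach_trans; [exact R1|exact R2]|exact R3]|exact Hst|].
    pose proof (Nat.log2_pos n ltac:(lia)).
    pose proof (Nat.le_log2_up_succ_log2 n).
    unfold STEP. nia.
  - rewrite Ho. unfold OUTS, arrows_predictions. rewrite map_map. reflexivity.
  - intros i o Hi. rewrite Ho in Hi. unfold OUTS in Hi. rewrite nth_error_map, nth_error_seq in Hi.
    destruct (Nat.ltb i n); [|discriminate]. simpl in Hi. inversion Hi. simpl. lia.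
Qed.
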